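(* Let $\tilde x:\mathbb{R}^{\tau p}\to\mathbb{R}^{\tau d}$ be a trajectory function of horizon $\tau$ whose dynamics $\phi_t$ are differentiable, $L_0$-Lipschitz continuous and have $L_1$-Lipschitz continuous gradients; let $h:\mathbb{R}^d\to\mathbb{R}$ be convex, differentiable with $L_1^h$-Lipschitz continuous gradient; let $g:\mathbb{R}^{\tau p}\to\mathbb{R}$ be convex, real $\tau$-decomposable, differentiable with $L_1^g$-Lipschitz continuous gradient. Consider the problem $\min_{\bar u}h(\tilde x_\tau(\bar u))+g(\bar u)$, a point $\bar u$ and $\gamma>0$. Then the regularized Gauss-Newton subproblem $$\min_{\bar v\in\mathbb{R}^{\tau p}}\ h\big(\tilde x_\tau(\bar u)+\nabla\tilde x_\tau(\bar u)^\top\bar v\big)+g(\bar u+\bar v)+\tfrac{1}{2\gamma}\|\bar v\|_2^2$$ is solved up to accuracy $\varepsilon$ by a fast gradient method with at most $$\mathcal{O}\Big(\sqrt{L_1^hM_0^2\gamma+L_1^g\gamma+1}\,\log(1/\varepsilon)\Big)$$ calls to an automatic-differentiation oracle, where $M_0$ is the Lipschitz constant of $\tilde x_\tau$.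
   Context: A trajectory function of horizon $\tau$ is $\tilde x(\bar u)=(\tilde x_1(\bar u);\ldots;\tilde x_\tau(\bar u))$ with $\tilde x_1(\bar u)=\phi_0(\hat x_0,u_0)$, $\tilde x_{t+1}(\bar u)=\phi_t(\tilde x_t(\bar u),u_t)$, for given $\hat x_0\in\mathbb{R}^d$, maps $\phi_t:\mathbb{R}^d\times\mathbb{R}^p\to\mathbb{R}^d$ and $\bar u=(u_0;\ldots;u_{\tau-1})\in\mathbb{R}^{\tau p}$. A function $g:\mathbb{R}^{\tau p}\to\mathbb{R}$ is real $\tau$-decomposable if $g(\bar u)=\sum_t g_t(u_t)$. For differentiable $F:\mathbb{R}^n\to\mathbb{R}^m$, $\nabla F(z)\in\mathbb{R}^{n\times m}$ is the transposed Jacobian. An automatic-differentiation oracle is a procedure that, given a trajectory function $\tilde x$ and a point $\bar u$, computes the gradient-vector product $\bar z\mapsto\nabla\tilde x(\bar u)\bar z$ for any $\bar z$ (one call per such back-propagation). *)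

(* Defs.v *)
From HB Require Import structures.
From mathcomp Require Import all_boot all_order all_algebra.
From mathcomp Require Import all_classical all_reals all_analysis.
Set Implicit Arguments.
Unset Strict Implicit.
Unset Printing Implicit Defensive.
Import Order.TTheory GRing.Theory Num.Theory.
Import numFieldNormedType.Exports.
Local Open Scope ring_scope.

Section Defs.
Variable R : realType.

Definition dotm m n (M N : 'M[R]_(m, n)) : R := \sum_i \sum_j M i j * N i j.
Definition norm2 m n (M : 'M[R]_(m, n)) : R := Num.sqrt (dotm M M).

Definition lipschitz2 m1 n1 m2 n2 (L : R) (f : 'M[R]_(m1, n1) -> 'M[R]_(m2, n2)) :=
  forall x y, norm2 (f x - f y) <= L * norm2 (x - y).

Definition smooth2 m1 n1 m2 n2 (L : R) (f : 'M[R]_(m1, n1) -> 'M[R]_(m2, n2)) :=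
  (forall x, differentiable f x) /\
  forall x y w, norm2 ('d f x w - 'd f y w) <= L * norm2 (x - y) * norm2 w.

Definition smooth_real m n (L : R) (f : 'M[R]_(m, n) -> R) :=
  (forall x, differentiable f x) /\
  forall x y w, `|'d f x w - 'd f y w| <= L * norm2 (x - y) * norm2 w.

Definition convex_fun m n (f : 'M[R]_(m, n) -> R) :=
  forall x y (t : R), 0 <= t <= 1 ->
    f ((1 - t) *: x + t *: y) <= (1 - t) * f x + t * f y.

(* Controls ubar = (u_0; ...; u_{tau-1}) are stored as the rows of a
   tau x p matrix (tau = n.+1); states x_t are row vectors in R^d. *)
Fixpoint traj n p d (phi : nat -> 'rV[R]_d -> 'rV[R]_p -> 'rV[R]_d)
    (x0 : 'rV[R]_d) (u : 'M[R]_(n.+1, p)) (t : nat) : 'rV[R]_d :=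
  match t with
  | 0 => x0
  | t'.+1 => phi t' (traj phi x0 u t') (row (inord t') u)
  end.

(* Trajectory function: row i (i < tau) is x_{i+1}. *)
Definition xtraj n p d (phi : nat -> 'rV[R]_d -> 'rV[R]_p -> 'rV[R]_d)
    (x0 : 'rV[R]_d) (u : 'M[R]_(n.+1, p)) : 'M[R]_(n.+1, d) :=
  \matrix_(i < n.+1, j < d) traj phi x0 u i.+1 0 j.

Definition xlast n p d phi x0 (u : 'M[R]_(n.+1, p)) : 'rV[R]_d :=
  row ord_max (@xtraj n p d phi x0 u).

(* Gradient-vector product zbar |-> grad F(u) zbar (adjoint of the differential
   w.r.t. the Euclidean inner product): one back-propagation. *)
Definition gvp m1 n1 m2 n2 (F : 'M[R]_(m1, n1) -> 'M[R]_(m2, n2)) u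
    (z : 'M[R]_(m2, n2)) : 'M[R]_(m1, n1) :=
  \matrix_(i, j) dotm z ('d F u (delta_mx i j)).

(* Oracle algorithms. Each step issues one oracle call: either a back-propagation
   query  inl z  (answer inl (grad xtil(u) z)) or a forward (transpose) query
   inr v  (answer inr (grad xtil(u)^T v)). *)
Definition oquery m p d := ('M[R]_(m, d) + 'M[R]_(m, p))%type.
Definition oanswer m p d := ('M[R]_(m, p) + 'M[R]_(m, d))%type.

Record oracle_alg m p d := OracleAlg {
  oa_calls : nat;
  oa_query : seq (oanswer m p d) -> oquery m p d;
  oa_out : seq (oanswer m p d) -> 'M[R]_(m, p) }.

Definition oracle_answer m p d (bwd : 'M[R]_(m, d) -> 'M[R]_(m, p))
    (fwd : 'M[R]_(m, p) -> 'M[R]_(m, d)) (q : oquery m p d) : oanswer m p d :=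
  match q with
  | inl z => inl (bwd z)
  | inr v => inr (fwd v)
  end.

Definition run_alg m p d (A : oracle_alg m p d) bwd fwd : 'M[R]_(m, p) :=
  oa_out A (iter (oa_calls A)
    (fun hs => rcons hs (oracle_answer bwd fwd (oa_query A hs))) [::]).

Definition gn_obj n p d (h : 'rV[R]_d -> R) (g : 'M[R]_(n.+1, p) -> R)
    (gamma : R) phi x0 (u : 'M[R]_(n.+1, p)) (v : 'M[R]_(n.+1, p)) : R :=
  h (@xlast n p d phi x0 u + row ord_max ('d (@xtraj n p d phi x0) u v))
  + g (u + v) + norm2 v ^+ 2 / (2 * gamma).

End Defs.

(* Main.v *)
Require Import Defs.
From HB Require Import structures.
From mathcomp Require Import all_boot all_order all_algebra.
From mathcomp Require Import all_classical all_reals all_analysis.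
From mathcomp Require Import ring lra.
Import Order.TTheory GRing.Theory Num.Theory.
Import numFieldNormedType.Exports.
Local Open Scope ring_scope.
Set Implicit Arguments.
Unset Strict Implicit.


Section Dot.
Variables (R : realType) (m n : nat).
Implicit Types M N P : 'M[R]_(m, n).

Lemma dotmC M N : dotm M N = dotm N M.
Proof. by rewrite /dotm; apply: eq_bigr => i _; apply: eq_bigr => j _; rewrite mulrC. Qed.

Lemma dotmDl M N P : dotm (M + N) P = dotm M P + dotm N P.
Proof.
rewrite /dotm -big_split; apply: eq_bigr => i _ /=; rewrite -big_split.
by apply: eq_bigr => j _; rewrite mxE mulrDl.
Qed.

Lemma dotmZl a M N : dotm (a *: M) N = a * dotm M N.
Proof.
rewrite /dotm mulr_sumr; apply: eq_bigr => i _; rewrite mulr_sumr.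
by apply: eq_bigr => j _; rewrite mxE mulrA.
Qed.

Lemma dotmDr M N P : dotm P (M + N) = dotm P M + dotm P N.
Proof. by rewrite dotmC dotmDl !(dotmC P). Qed.

Lemma dotmZr a M N : dotm N (a *: M) = a * dotm N M.
Proof. by rewrite dotmC dotmZl dotmC. Qed.

Lemma dotmNl M N : dotm (- M) N = - dotm M N.
Proof. by rewrite -scaleN1r dotmZl mulN1r. Qed.

Lemma dotmNr M N : dotm N (- M) = - dotm N M.
Proof. by rewrite -scaleN1r dotmZr mulN1r. Qed.

Lemma dotmBl M N P : dotm (M - N) P = dotm M P - dotm N P.
Proof. by rewrite dotmDl dotmNl. Qed.

Lemma dotmBr M N P : dotm P (M - N) = dotm P M - dotm P N.
Proof. by rewrite dotmDr dotmNr. Qed.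

Lemma dotm0l M : dotm 0 M = 0.
Proof. by rewrite -(scale0r 0) dotmZl mul0r. Qed.

Lemma dotm0r M : dotm M 0 = 0.
Proof. by rewrite dotmC dotm0l. Qed.

Lemma dotm_ge0 M : 0 <= dotm M M.
Proof. by apply: sumr_ge0 => i _; apply: sumr_ge0 => j _; by rewrite -expr2 sqr_ge0. Qed.

Lemma dotm_eq0 M : dotm M M = 0 -> M = 0.
Proof.
move=> /eqP; rewrite psumr_eq0; last by move=> i _; apply: sumr_ge0 => j _; by rewrite -expr2 sqr_ge0.
move=> /allP H; apply/matrixP => i j; rewrite mxE.
have /H := mem_index_enum i; rewrite implyTb psumr_eq0; last by move=> k _; by rewrite -expr2 sqr_ge0.
move=> /allP /(_ j (mem_index_enum j)); rewrite implyTb mulf_eq0 orbb => /eqP //.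
Qed.

Lemma norm2_sq M : norm2 M ^+ 2 = dotm M M.
Proof. by rewrite /norm2 sqr_sqrtr // dotm_ge0. Qed.

Lemma norm2_ge0 M : 0 <= norm2 M.
Proof. exact: sqrtr_ge0. Qed.

Lemma norm2Z a M : norm2 (a *: M) = `|a| * norm2 M.
Proof. by rewrite /norm2 dotmZl dotmZr mulrA sqrtrM ?sqr_ge0 // sqrtr_sqr. Qed.

Lemma dotm_sumr I (r : seq I) (P : pred I) (F : I -> 'M[R]_(m, n)) N :
  dotm N (\sum_(i <- r | P i) F i) = \sum_(i <- r | P i) dotm N (F i).
Proof. exact: (big_morph (dotm N) (fun a b => dotmDr a b N) (dotm0r N)). Qed.

Lemma dotm_2ab M N : 2 * dotm M N <= dotm M M + dotm N N.
Proof.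
have := dotm_ge0 (M - N); rewrite !dotmBl !dotmBr (dotmC N M); lra.
Qed.

Lemma cauchy_schwarz M N : dotm M N <= norm2 M * norm2 N.
Proof.
have hM := norm2_ge0 M; have hN := norm2_ge0 N.
have n0 : forall P : 'M[R]_(m, n), norm2 P = 0 -> P = 0.
  move=> P /eqP; rewrite /norm2 sqrtr_eq0 => H; apply: dotm_eq0.
  by apply/eqP; rewrite eq_le H dotm_ge0.
have [/n0 ->|Mp] := eqVneq (norm2 M) 0; first by rewrite dotm0l mulr_ge0 // norm2_ge0.
have [/n0 ->|Np] := eqVneq (norm2 N) 0; first by rewrite dotm0r mulr_ge0 // norm2_ge0.
have Mp' : 0 < norm2 M by rewrite lt_def Mp hM.
have Np' : 0 < norm2 N by rewrite lt_def Np hN.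
have := dotm_2ab ((norm2 N / norm2 M) *: M) N.
rewrite !dotmZl !dotmZr -!norm2_sq => H.
have E : norm2 N / norm2 M * (norm2 N / norm2 M * norm2 M ^+ 2) + norm2 N ^+ 2
   = 2 * norm2 N ^+ 2.
  by field.
rewrite E in H.
have H2 : norm2 N / norm2 M * dotm M N <= norm2 N * norm2 N by lra.
rewrite -ler_pdivlMl ?divr_gt0 // in H2.
by rewrite (le_trans H2) // invf_div mulrA divfK // mulrC.
Qed.
End Dot.


Section FGM.
Variables (R : realType) (m n : nat).
Variables (F : 'M[R]_(m, n) -> R) (G : 'M[R]_(m, n) -> 'M[R]_(m, n)).
Variables (mu L q : R) (xs : 'M[R]_(m, n)).
Hypothesis mu0 : 0 < mu.
Hypothesis q0 : 0 < q.
Hypothesis q1 : q <= 1.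
Hypothesis Lq : L * q ^+ 2 = mu.
Hypothesis HS : forall x y, F y <= F x + dotm (G x) (y - x) + L / 2 * dotm (y - x) (y - x).
Hypothesis HC : forall x y, F x + dotm (G x) (y - x) + mu / 2 * dotm (y - x) (y - x) <= F y.

Definition fgm_y (s : 'M[R]_(m, n) * 'M[R]_(m, n)) := (1 + q)^-1 *: (s.1 + q *: s.2).

Definition fgm_step (s : 'M[R]_(m, n) * 'M[R]_(m, n)) :=
  let y := fgm_y s in let g := G y in
  (y - L^-1 *: g, (1 - q) *: s.2 + q *: y - (q / mu) *: g).

Definition Phi (s : 'M[R]_(m, n) * 'M[R]_(m, n)) :=
  F s.1 - F xs + mu / 2 * dotm (s.2 - xs) (s.2 - xs).

Lemma fgm_aux (a b g : 'M[R]_(m, n)) fx fy fs fx' :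
 fx' <= fy + dotm g (- (L^-1 *: g)) + L / 2 * dotm (- (L^-1 *: g)) (- (L^-1 *: g)) ->
 fy + dotm g (q *: (b - a)) + mu / 2 * dotm (q *: (b - a)) (q *: (b - a)) <= fx ->
 fy + dotm g (- b) + mu / 2 * dotm (- b) (- b) <= fs ->
 fx' - fs + mu / 2 * dotm ((1 - q) *: a + q *: b - (q / mu) *: g)
                          ((1 - q) *: a + q *: b - (q / mu) *: g)
  <= (1 - q) * (fx - fs + mu / 2 * dotm a a).
Proof.
have H4 := dotm_ge0 (a - b).
have H5 := dotm_ge0 (b - a).
move: H4 H5.
rewrite !(dotmNl, dotmNr, dotmZl, dotmZr, dotmDl, dotmDr, dotmBl, dotmBr).
rewrite (dotmC b a) (dotmC a g) (dotmC b g).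
set aa := dotm a a. set bb := dotm b b. set ab := dotm a b. set gg := dotm g g.
set ag := dotm g a. set bg := dotm g b.
move=> H4 H5 H1 H2 H3.
have qn0 : q != 0 by rewrite gt_eqF.
have mun0 : mu != 0 by rewrite gt_eqF.
have LE : L = mu / q ^+ 2 by rewrite -Lq mulfK // expf_neq0.
rewrite LE in H1.
set s1 := fy - q ^+ 2 * gg / (2 * mu) - fx'.
set s2 := fx - (fy + q * (bg - ag) + mu / 2 * (q * (q * (bb - ab - (ab - aa))))).
set s3 := fs - (fy - bg + mu / 2 * - - bb).
have hs1 : 0 <= s1.
  rewrite /s1 subr_ge0; apply: (le_trans H1); rewrite le_eqVlt; apply/orP; left; apply/eqP; field; by rewrite ?mun0 ?qn0.
have hs2 : 0 <= s2 by rewrite /s2 subr_ge0.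
have hs3 : 0 <= s3 by rewrite /s3 subr_ge0.
have KEY : (1 - q) * (fx - fs + mu / 2 * aa) - (fx' - fs +
  mu / 2 * ((1 - q) * ((1 - q) * aa + q * ab - q / mu * ag) +
   q * ((1 - q) * ab + q * bb - q / mu * bg) -
   q / mu * ((1 - q) * ag + q * bg - q / mu * gg)))
  = s1 + (1 - q) * s2 + q * s3 + mu / 2 * q * (1 - q) * (1 + q) * (aa - ab - (ab - bb)).
  rewrite /s1 /s2 /s3; field; by rewrite ?mun0 ?qn0.
have q1' : 0 <= 1 - q by rewrite subr_ge0.
have p2 : 0 <= (1 - q) * s2 by apply: mulr_ge0.
have p3 : 0 <= q * s3 by apply: mulr_ge0 => //; apply: ltW.
have p4 : 0 <= mu / 2 * q * (1 - q) * (1 + q) * (aa - ab - (ab - bb)).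
  apply: mulr_ge0 => //; apply: mulr_ge0; first apply: mulr_ge0 => //.
    by apply: mulr_ge0; [apply: divr_ge0 => //; apply: ltW|apply: ltW].
  by apply: addr_ge0 => //; apply: ltW.
move: KEY p2 p3 p4 hs1.
set T1 := (1 - q) * s2. set T2 := q * s3. set T3 := mu / 2 * q * _ * _ * _.
set LHS := fx' - fs + _. set RH := (1 - q) * _.
move=> KEY p2 p3 p4 hs1. lra.
Qed.
Lemma fgm_step_dec s : Phi (fgm_step s) <= (1 - q) * Phi s.
Proof.
case: s => x z; rewrite /Phi /fgm_step /=.
set y := fgm_y (x, z); set g := G y.
have q1' : 1 + q != 0 by rewrite gt_eqF // ltr_pwDr.
have e1 : (1 - q) *: z + q *: y - (q / mu) *: g - xs
   = (1 - q) *: (z - xs) + q *: (y - xs) - (q / mu) *: g.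
  by apply/matrixP => i j; rewrite !mxE; ring.
have e2 : x - y = q *: ((y - xs) - (z - xs)).
  by apply/matrixP => i j; rewrite /y /fgm_y /= !mxE; field.
have e4 : y - L^-1 *: g - y = - (L^-1 *: g).
  by apply/matrixP => i j; rewrite !mxE; ring.
have e3 : xs - y = - (y - xs) by rewrite opprB.
have H1 := HS y (y - L^-1 *: g).
have H2 := HC y x.
have H3 := HC y xs.
rewrite e1; rewrite e4 in H1; rewrite e2 in H2; rewrite e3 in H3.
exact: fgm_aux H1 H2 H3.
Qed.

Lemma Phi_iter k s : Phi (iter k fgm_step s) <= (1 - q) ^+ k * Phi s.
Proof.
elim: k => [|k IH] /=; first by rewrite expr0 mul1r.
apply: (le_trans (fgm_step_dec _)).
rewrite exprS -mulrA ler_wpM2l // subr_ge0 //.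
Qed.

Hypothesis Hmin : forall w, F xs <= F w.

Lemma G_xs : G xs = 0.
Proof.
have L0 : 0 < L.
  by rewrite -(@pmulr_lgt0 _ (q ^+ 2)) ?exprn_gt0 // Lq.
have := HS xs (xs - L^-1 *: G xs).
have := Hmin (xs - L^-1 *: G xs).
have -> : xs - L^-1 *: G xs - xs = - (L^-1 *: G xs).
  by apply/matrixP => i j; rewrite !mxE; ring.
rewrite !(dotmNl, dotmNr, dotmZl, dotmZr).
move=> H1 H2.
have H3 : L^-1 * dotm (G xs) (G xs) <= 0.
  rewrite opprK in H2.
  have E : L / 2 * (L^-1 * (L^-1 * dotm (G xs) (G xs))) = (L^-1 * dotm (G xs) (G xs)) / 2.
    rewrite [LHS]mulrC -!mulrA; congr (_ * _).
    by rewrite [_ * (L / 2)]mulrC !mulrA mulVf ?gt_eqF // mul1r mulrC.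
  rewrite E in H2; lra.
apply: dotm_eq0; apply/eqP; rewrite eq_le dotm_ge0 andbT.
by rewrite pmulr_rle0 ?invr_gt0 in H3.
Qed.

Lemma Phi0 : Phi (0, 0) <= 2 * (F 0 - F xs).
Proof.
rewrite /Phi /=.
have := HC xs 0; rewrite G_xs dotm0l addr0.
have := Hmin 0.
have -> : 0 - xs = - (xs) :> 'M[R]_(m, n) by rewrite sub0r.
have -> : dotm (- xs) (- xs) = dotm (0 - xs) (0 - xs) by rewrite sub0r.
lra.
Qed.

Lemma fgm_rate k : F (iter k fgm_step (0, 0)).1 - F xs <= 2 * (1 - q) ^+ k * (F 0 - F xs).
Proof.
have h1 : F (iter k fgm_step (0, 0)).1 - F xs <= Phi (iter k fgm_step (0, 0)).
  rewrite /Phi lerDl; apply: mulr_ge0; last exact: dotm_ge0.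
  by apply: divr_ge0 => //; apply: ltW.
apply: (le_trans h1); apply: (le_trans (Phi_iter _ _)).
have q1' : 0 <= 1 - q by rewrite subr_ge0.
apply: le_trans (ler_wpM2l (exprn_ge0 k q1') Phi0) _.
by rewrite mulrA [_ * 2]mulrC.
Qed.

End FGM.


Section Lin.
Variables (R : realType) (m n : nat) (W : normedModType R).

Lemma linear_mx_expand (f : {linear 'M[R]_(m, n) -> W}) M :
  f M = \sum_(i < m) \sum_(j < n) M i j *: f (delta_mx i j).
Proof.
rewrite {1}(matrix_sum_delta M) linear_sum; apply: eq_bigr => i _.
by rewrite linear_sum; apply: eq_bigr => j _; rewrite linearZ.
Qed.

Lemma linear_mx_continuous (f : 'M[R]_(m, n) -> W) : linear f -> continuous f.
Proof.
move=> lf.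
pose fL : {linear 'M[R]_(m, n) -> W} := HB.pack f (GRing.isLinear.Build _ _ _ _ f lf).
have E : f = \sum_(i < m) \sum_(j < n) (fun M : 'M[R]_(m, n) => M i j *: f (delta_mx i j)).
  apply/funext => M; rewrite fct_sumE.
  have -> : f M = fL M by []. rewrite (linear_mx_expand fL M); apply: eq_bigr => i _; rewrite fct_sumE //.
move=> x; apply: differentiable_continuous; rewrite E.
apply: differentiable_sum => i; apply: differentiable_sum => j.
exact: differentiableZl (differentiable_coord _ _ _).
Qed.

Lemma linear_mx_diff (f : 'M[R]_(m, n) -> W) x : linear f ->
  differentiable f x /\ 'd f x = f :> (_ -> _).
Proof.
move=> lf.
pose fL : {linear 'M[R]_(m, n) -> W} := HB.pack f (GRing.isLinear.Build _ _ _ _ f lf).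
have c : continuous fL := linear_mx_continuous lf.
split; first exact: (linear_differentiable x c).
exact: (diff_lin x c).
Qed.
End Lin.

Section MVTb.
Variables (R : realType) (m n : nat).

Lemma line_diff (x w : 'M[R]_(m, n)) t :
  differentiable (fun s : R => s *: w + x) t /\
  'd (fun s : R => s *: w + x) t = (fun s : R => s *: w) :> (R -> _).
Proof.
have H : is_diff t (( *:%R ^~ w) + cst x) (( *:%R ^~ w) + 0).
  exact: is_diffD.
split; first exact: (@ex_diff _ _ _ _ _ _ _ H).
have := @diff_val _ _ _ _ _ _ _ H; rewrite addr0 => <-; by [].
Qed.

Lemma mvt_bound (f : 'M[R]_(m, n) -> R) L x w : smooth_real L f -> 0 <= L ->
  `| f (x + w) - f x - 'd f x w | <= L * dotm w w.
Proof.
move=> [df Hl] L0.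
set k := 'd f x w.
pose c := fun s : R => s *: w + x.
pose phi := (f \o c) - ( *:%R ^~ k).
have dphi : forall t, differentiable phi t /\ 'd phi t 1 = 'd f (c t) w - k.
  move=> t; have [dc dcE] := line_diff x w t.
  have dfc : differentiable (f \o c) t by apply: differentiable_comp => //.
  have dl : differentiable (( *:%R ^~ k) : R -> R) t.
    exact: (@ex_diff _ _ _ _ _ _ _ (is_diff_scalel t k)).
  split; first exact: differentiableB.
  rewrite diffB // diff_comp // /= dcE /= scale1r.
  by rewrite (@diff_val _ _ _ _ _ _ _ (is_diff_scalel t k)) /= scale1r.
have isd : forall t : R, is_derive t (1 : R) phi ('d f (c t) w - k).
  move=> t; have [d1 d2] := dphi t.
  apply: DeriveDef; first exact: diff_derivable.
  by rewrite deriveE.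
have cont : continuous phi.
  by move=> t; have [d1 _] := dphi t; apply: differentiable_continuous.
have [t0 t0in E] := MVT_segment ler01 (fun t _ => isd t) (continuous_subspaceT cont).
have -> : f (x + w) - f x - k = phi 1 - phi 0.
  rewrite /phi /c /= !fctE /= !scale0r !scale1r add0r (addrC w x) subr0; ring.
rewrite E subr0 mulr1.
have := Hl (c t0) x w.
have -> : c t0 - x = t0 *: w by rewrite /c addrK.
rewrite norm2Z => H; apply: (le_trans H).
have e : L * (`|t0| * norm2 w) * norm2 w = (L * dotm w w) * `|t0| by rewrite -norm2_sq; ring.
rewrite e ler_piMr // ?mulr_ge0 ?dotm_ge0 //.
by move: t0in; rewrite in_itv /= => /andP [a b]; rewrite ger0_norm.
Qed.

Lemma mvt_upper (f : 'M[R]_(m, n) -> R) L x w : smooth_real L f -> 0 <= L ->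
  f (x + w) <= f x + 'd f x w + L * dotm w w.
Proof.
move=> sf L0; have := mvt_bound x w sf L0.
rewrite ler_norml => /andP [_ H]; lra.
Qed.

Lemma mvt_lower (f : 'M[R]_(m, n) -> R) L x w : smooth_real L f -> 0 <= L ->
  f x + 'd f x w - L * dotm w w <= f (x + w).
Proof.
move=> sf L0; have := mvt_bound x w sf L0.
rewrite ler_norml => /andP [H _]; lra.
Qed.

Lemma small_lin (a b c : R) : 0 <= c -> (forall t, 0 < t -> t <= 1 -> a <= b + c * t) -> a <= b.
Proof.
move=> c0 H; apply/contraT; rewrite -ltNge => ba.
have [c00|cp] := eqVneq c 0.
  by have := H 1 ltr01 (lexx _); rewrite c00 mul0r addr0 leNgt ba.
have cp' : 0 < c by rewrite lt_def cp c0.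
pose t := Order.min 1 ((a - b) / (2 * c)).
have t0 : 0 < t by rewrite /t lt_min ltr01 divr_gt0 ?subr_gt0 ?mulr_gt0.
have t1 : t <= 1 by rewrite /t ge_min lexx.
have t2 : t <= (a - b) / (2 * c) by rewrite /t ge_min lexx orbT.
have := H t t0 t1.
have : c * t <= (a - b) / 2.
  apply: (le_trans (ler_wpM2l c0 t2)).
  have -> : c * ((a - b) / (2 * c)) = (a - b) / 2 by field.
  by [].
lra.
Qed.

Lemma convex_first (f : 'M[R]_(m, n) -> R) L x y : convex_fun f -> smooth_real L f -> 0 <= L ->
  f x + 'd f x (y - x) <= f y.
Proof.
move=> cf sf L0.
apply: (@small_lin _ _ (L * dotm (y - x) (y - x))).
  by apply: mulr_ge0 => //; apply: dotm_ge0.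
move=> t t0 t1.
have h1 := cf x y t; rewrite ltW //= t1 in h1; have {h1} h1 := h1 isT.
have e : (1 - t) *: x + t *: y = x + t *: (y - x).
  by apply/matrixP => i j; rewrite !mxE; ring.
rewrite e in h1.
have h2 := mvt_lower x (t *: (y - x)) sf L0.
rewrite linearZ /= dotmZl dotmZr in h2.
have h3 : t * ('d f x (y - x)) <= t * (f y - f x + L * dotm (y - x) (y - x) * t).
  move: h1 h2; set D := dotm _ _; set d := 'd f x (y - x); set P := f (x + _).
  move=> h1 h2; have e2 : t *: d = t * d by []. rewrite e2 in h2; lra.
rewrite ler_pM2l // in h3; lra.
Qed.

End MVTb.


Section Jac.
Variable R : realType.

Lemma dotm_abs (a b : nat) (M N : 'M[R]_(a, b)) : `|dotm M N| <= norm2 M * norm2 N.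
Proof.
rewrite ler_norml cauchy_schwarz andbT.
have := cauchy_schwarz M (- N).
have -> : norm2 (- N) = norm2 N by rewrite -scaleN1r norm2Z normrN normr1 mul1r.
rewrite dotmNr; lra.
Qed.

Lemma diff_lip_bound (a b c e a' b' : nat) (F : 'M[R]_(a, b) -> 'M[R]_(c, e))
   (P : 'M[R]_(c, e) -> 'M[R]_(a', b')) u M0 w :
  0 <= M0 -> differentiable F u -> linear P -> lipschitz2 M0 (P \o F) ->
  norm2 (P ('d F u w)) <= M0 * norm2 w.
Proof.
move=> M00 dF lP lipF.
set cc := P ('d F u w).
pose l := fun M : 'M[R]_(c, e) => dotm cc (P M).
have ll : linear l.
  move=> k M N; rewrite /l.
  have -> : P (k *: M + N) = k *: P M + P N by apply: lP.
  by rewrite dotmDr dotmZr.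
have [dl dlE] := linear_mx_diff (F u) ll.
pose psi := l \o F.
have dpsi : differentiable psi u by apply: differentiable_comp.
have Dpsi : 'D_w psi u = dotm cc cc.
  by rewrite deriveE // /psi diff_comp // dlE.
have der : derivable psi u w by apply: diff_derivable.
have B : 'D_w psi u <= norm2 cc * (M0 * norm2 w).
  apply: limr_le => //.
  near=> h.
  have hN0 : h != 0 by near: h; exact: nbhs_dnbhs_neq.
  rewrite /= /psi /l /= -dotmBr.
  set D := P (F (h *: w + u)) - P (F u).
  have hD : norm2 D <= M0 * (`|h| * norm2 w).
    have := lipF (h *: w + u) u; rewrite /= addrK norm2Z.
    by rewrite /D.
  have ee : h^-1 *: dotm cc D = h^-1 * dotm cc D by [].
  rewrite ee; apply: (le_trans (ler_norm _)); rewrite normrM normfV.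
  rewrite ler_pdivrMl ?normr_gt0 //.
  apply: (le_trans (dotm_abs cc D)).
  have := norm2_ge0 cc => c0.
  have := ler_wpM2l c0 hD; lra.
have Bc : norm2 cc ^+ 2 <= norm2 cc * (M0 * norm2 w) by rewrite norm2_sq -Dpsi.
have [c0|cp] := eqVneq (norm2 cc) 0.
  by rewrite c0 mulr_ge0 // norm2_ge0.
have cp' : 0 < norm2 cc by rewrite lt_def cp norm2_ge0.
by rewrite expr2 ler_pM2l // in Bc.
Unshelve. all: by end_near.
Qed.

Lemma traj_diff (n p d : nat) (phi : nat -> 'rV[R]_d -> 'rV[R]_p -> 'rV[R]_d) x0 :
  (forall t, (t < n.+1)%N -> forall w,
     differentiable (fun w : 'rV[R]_(d + p) => phi t (lsubmx w) (rsubmx w)) w) ->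
  forall k, (k <= n.+1)%N -> forall u : 'M[R]_(n.+1, p),
    differentiable (fun u => traj phi x0 u k) u.
Proof.
move=> Hphi; elim=> [|k IH] hk u /=; first exact: differentiable_cst.
pose Phi := fun w : 'rV[R]_(d + p) => phi k (lsubmx w) (rsubmx w).
pose l1 := fun a : 'rV[R]_d => row_mx a (0 : 'rV[R]_p).
pose l2 := fun v : 'M[R]_(n.+1, p) => row_mx (0 : 'rV[R]_d) (row (inord k) v).
have ll1 : linear l1.
  by move=> c a b; rewrite /l1 scale_row_mx add_row_mx scaler0 addr0.
have ll2 : linear l2.
  move=> c a b; rewrite /l2 scale_row_mx add_row_mx scaler0 addr0.
  by congr row_mx; apply/rowP => j; rewrite !mxE.
have E : (fun u => phi k (traj phi x0 u k) (row (inord k) u))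
   = Phi \o ((l1 \o (fun u => traj phi x0 u k)) + l2).
  apply/funext => v; rewrite /Phi /l1 /l2 /= fctE /= add_row_mx addr0 add0r.
  by rewrite row_mxKl row_mxKr.
rewrite E; apply: differentiable_comp; last exact: Hphi.
apply: differentiableD; last by have [] := linear_mx_diff u ll2.
apply: differentiable_comp; first exact: IH (ltnW hk) u.
by have [] := linear_mx_diff (traj phi x0 u k) ll1.
Qed.

Lemma xtraj_sum (n p d : nat) (phi : nat -> 'rV[R]_d -> 'rV[R]_p -> 'rV[R]_d) x0 u :
  xtraj phi x0 u = \sum_(i < n.+1) (delta_mx i 0 : 'cV[R]_n.+1) *m traj phi x0 u i.+1.
Proof.
apply/matrixP => a b; rewrite mxE summxE (bigD1 a) //= big1 ?addr0.
  by rewrite mxE big_ord1 !mxE !eqxx mul1r.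
move=> i ia; rewrite mxE big_ord1 !mxE.
by rewrite eq_sym (negbTE ia) mul0r.
Qed.

Lemma xtraj_diff (n p d : nat) (phi : nat -> 'rV[R]_d -> 'rV[R]_p -> 'rV[R]_d) x0 :
  (forall t, (t < n.+1)%N -> forall w,
     differentiable (fun w : 'rV[R]_(d + p) => phi t (lsubmx w) (rsubmx w)) w) ->
  forall u : 'M[R]_(n.+1, p), differentiable (xtraj phi x0) u.
Proof.
move=> Hphi u.
have -> : xtraj phi x0 = \sum_(i < n.+1)
    ((fun M : 'rV[R]_d => (delta_mx i 0 : 'cV[R]_n.+1) *m M) \o (fun u => traj phi x0 u i.+1)).
  by apply/funext => v; rewrite fct_sumE xtraj_sum.
apply: differentiable_sum => i; apply: differentiable_comp.
  exact: traj_diff.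
have ll : linear (fun M : 'rV[R]_d => (delta_mx i 0 : 'cV[R]_n.+1) *m M).
  by move=> c a b; rewrite mulmxDr scalemxAr.
by have [] := linear_mx_diff (traj phi x0 u i.+1) ll.
Qed.
End Jac.


Section Grad.
Variable R : realType.

Definition gradr (a b : nat) (f : 'M[R]_(a, b) -> R) x : 'M[R]_(a, b) :=
  \matrix_(i, j) 'd f x (delta_mx i j).

Lemma gradrE (a b : nat) (f : 'M[R]_(a, b) -> R) x v : 'd f x v = dotm (gradr f x) v.
Proof.
rewrite (linear_mx_expand ('d f x) v) /dotm; apply: eq_bigr => i _.
by apply: eq_bigr => j _; rewrite mxE mulrC.
Qed.

Lemma linf_dotm (a b : nat) (l : 'M[R]_(a, b) -> R) v : linear l ->
  l v = dotm (\matrix_(i, j) l (delta_mx i j)) v.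
Proof.
move=> ll.
pose fL : {linear 'M[R]_(a, b) -> R} := HB.pack l (GRing.isLinear.Build _ _ _ _ l ll).
have -> : l v = fL v by [].
rewrite (linear_mx_expand fL v) /dotm; apply: eq_bigr => i _.
by apply: eq_bigr => j _; rewrite mxE mulrC.
Qed.

Lemma gvpE (a b c e : nat) (F : 'M[R]_(a, b) -> 'M[R]_(c, e)) u z v :
  dotm (gvp F u z) v = dotm z ('d F u v).
Proof.
have ll : linear (fun v => dotm z ('d F u v)).
  by move=> k x y; rewrite linearP /= dotmDr dotmZr.
by rewrite (linf_dotm v ll).
Qed.

Definition liftl (n d : nat) (r : 'rV[R]_d) : 'M[R]_(n.+1, d) :=
  \matrix_(i, j) (if i == ord_max then r 0 j else 0).

Lemma dotm_liftl (n d : nat) (r : 'rV[R]_d) (M : 'M[R]_(n.+1, d)) :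
  dotm (liftl n r) M = dotm r (row ord_max M).
Proof.
rewrite /dotm (bigD1 ord_max) //= [X in _ + X]big1 ?addr0.
  rewrite big_ord1; apply: eq_bigr => j _; by rewrite !mxE eqxx.
move=> i /negbTE Hi; apply: big1 => j _; by rewrite mxE Hi mul0r.
Qed.

Lemma row_lin (m n : nat) (i : 'I_m) : linear (@row R m n i).
Proof. by move=> c a b; apply/rowP => j; rewrite !mxE. Qed.

End Grad.

Section Alg.
Variables (R : realType) (n p d : nat) (h : 'rV[R]_d -> R) (g : 'M[R]_(n.+1, p) -> R).
Variables (gamma : R) (u : 'M[R]_(n.+1, p)) (b : 'rV[R]_d) (mu L q : R).

Definition Galg (bw : 'M[R]_(n.+1, p)) (y : 'M[R]_(n.+1, p)) : 'M[R]_(n.+1, p) :=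
  bw + gradr g (u + y) + gamma^-1 *: y.

Definition upd (s : 'M[R]_(n.+1, p) * 'M[R]_(n.+1, p)) (bw : 'M[R]_(n.+1, p)) :=
  fgm_step (Galg bw) mu L q s.

Fixpoint st (l : seq (oanswer R n.+1 p d)) : 'M[R]_(n.+1, p) * 'M[R]_(n.+1, p) :=
  match l with
  | a1 :: _ :: rest => upd (st rest) (if a1 is inl bw then bw else 0)
  | _ => (0, 0)
  end.

Definition qry (hs : seq (oanswer R n.+1 p d)) : oquery R n.+1 p d :=
  if odd (size hs) then
    inl (liftl n (gradr h (b + row ord_max (if last (inl 0) hs is inr jy then jy else 0))))
  else inr (fgm_y q (st (rev hs))).

Definition outp (hs : seq (oanswer R n.+1 p d)) := (st (rev hs)).1.

Definition alg (K : nat) : oracle_alg R n.+1 p d := OracleAlg K.*2 qry outp.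

Variables (bwd : 'M[R]_(n.+1, d) -> 'M[R]_(n.+1, p)) (fwd : 'M[R]_(n.+1, p) -> 'M[R]_(n.+1, d)).

Definition Gtrue (y : 'M[R]_(n.+1, p)) := Galg (bwd (liftl n (gradr h (b + row ord_max (fwd y))))) y.

Definition stepf (hs : seq (oanswer R n.+1 p d)) := rcons hs (oracle_answer bwd fwd (qry hs)).

Lemma size_iter j : size (iter j stepf [::]) = j.
Proof. by elim: j => //= j IH; rewrite size_rcons IH. Qed.

Lemma run_iter k : st (rev (iter k.*2 stepf [::])) = iter k (fgm_step Gtrue mu L q) (0, 0).
Proof.
elim: k => [|k IH]; first by [].
set H := iter k.*2 stepf [::].
have E : iter (k.+1).*2 stepf [::] = stepf (stepf H) by rewrite doubleS.
have sH : size H = k.*2 by rewrite size_iter.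
have q1 : qry H = inr (fgm_y q (st (rev H))) by rewrite /qry sH odd_double.
have E2 : stepf H = rcons H (inr (fwd (fgm_y q (st (rev H))))) by rewrite /stepf q1.
have q2 : qry (rcons H (inr (fwd (fgm_y q (st (rev H)))))) =
   inl (liftl n (gradr h (b + row ord_max (fwd (fgm_y q (st (rev H))))))).
  by rewrite /qry size_rcons sH oddS odd_double last_rcons.
have -> : iter k.+1 (fgm_step Gtrue mu L q) (0, 0) = fgm_step Gtrue mu L q (st (rev H)).
  exact: (congr1 (fgm_step Gtrue mu L q) (esym IH)).
rewrite E E2 /stepf q2 !rev_rcons.
clearbody H.
rewrite [LHS]/= /upd.
move: (st (rev H)) => s0.
by rewrite /fgm_step /Gtrue.
Qed.

Lemma run_alg_eq K : run_alg (alg K) bwd fwd = (iter K (fgm_step Gtrue mu L q) (0, 0)).1.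
Proof.
have -> : run_alg (alg K) bwd fwd = outp (iter K.*2 stepf [::]) by [].
by rewrite /outp run_iter.
Qed.
End Alg.


Section Obj.
Variable R : realType.

Lemma dotm_expand (a b : nat) (x y : 'M[R]_(a, b)) :
  dotm (x + y) (x + y) = dotm x x + 2 * dotm x y + dotm y y.
Proof. by rewrite !dotmDl !dotmDr (dotmC y x); ring. Qed.

Lemma obj_props (n p d : nat) (h : 'rV[R]_d -> R) (g : 'M[R]_(n.+1, p) -> R)
   L1h L1g M0 gamma (u : 'M[R]_(n.+1, p)) b phi x0 :
 0 <= L1h -> 0 <= L1g -> 0 <= M0 -> 0 < gamma ->
 convex_fun h -> smooth_real L1h h -> convex_fun g -> smooth_real L1g g ->
 differentiable (@xtraj R n p d phi x0) u -> lipschitz2 M0 (@xlast R n p d phi x0) -> xlast phi x0 u = b ->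
 let F := gn_obj h g gamma phi x0 u in
 let G := Gtrue h g gamma u b (gvp (xtraj phi x0) u) ('d (xtraj phi x0) u) in
 (forall x y, F y <= F x + dotm (G x) (y - x)
      + (L1h * M0 ^+ 2 + L1g + (2 * gamma)^-1) * dotm (y - x) (y - x)) /\
 (forall x y, F x + dotm (G x) (y - x) + gamma^-1 / 2 * dotm (y - x) (y - x) <= F y).
Proof.
move=> hL1h hL1g hM0 hg cvh smh cvg smg dX lipM0 hb F G.
set J := 'd (xtraj phi x0) u.
pose A := fun w => row ord_max (J w).
have FA : forall y, F y = h (b + A y) + g (u + y) + dotm y y / (2 * gamma).
  by move=> y; rewrite /F /gn_obj hb norm2_sq.
have Alin : forall y y', A y' = A y + A (y' - y).
  move=> y y'; rewrite /A linearB /=; apply/rowP => j; rewrite !mxE; ring.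
have Gdot : forall y w, dotm (G y) w
    = 'd h (b + A y) (A w) + 'd g (u + y) w + gamma^-1 * dotm y w.
  move=> y w; rewrite /G /Gtrue /Galg !dotmDl gvpE dotm_liftl dotmZl -!gradrE.
  by [].
have Ab : forall w, dotm (A w) (A w) <= M0 ^+ 2 * dotm w w.
  move=> w; have := diff_lip_bound w hM0 dX (@row_lin R _ _ ord_max) lipM0.
  rewrite -/J -/(A w) => H.
  rewrite -!norm2_sq -exprMn; apply: lerXn2r => //; rewrite ?nnegrE ?norm2_ge0 //.
  by apply: mulr_ge0 => //; apply: norm2_ge0.
have c2 : gamma^-1 = 2 * (2 * gamma)^-1 by field; rewrite gt_eqF.
split.
  move=> x y; set dy := y - x.
  have yE : y = x + dy by rewrite /dy addrC subrK.
  rewrite (FA y) (FA x) Gdot (Alin x y) -/dy addrA.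
  have e1 : u + y = (u + x) + dy by rewrite yE addrA.
  rewrite e1.
  have h1 := mvt_upper (b + A x) (A dy) smh hL1h.
  have g1 := mvt_upper (u + x) dy smg hL1g.
  have ab := ler_wpM2l hL1h (Ab dy).
  have q1 : dotm y y = dotm x x + 2 * dotm x dy + dotm dy dy.
    by rewrite {1 2}yE dotm_expand.
  rewrite q1 c2.
  move: h1 g1 ab.
  set P1 := h _. set P2 := h _. set P3 := g _. set P4 := g _.
  set D1 := 'd h _ _. set D2 := 'd g _ _.
  set c := (2 * gamma)^-1.
  move=> h1 g1 ab.
  have cpos : 0 <= c by rewrite invr_ge0 mulr_ge0 // ltW.
  nra.
move=> x y; set dy := y - x.
have yE : y = x + dy by rewrite /dy addrC subrK.
rewrite (FA y) (FA x) Gdot.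
have h1 := convex_first (b + A x) (b + A y) cvh smh hL1h.
have g1 := convex_first (u + x) (u + y) cvg smg hL1g.
have e1 : b + A y - (b + A x) = A dy.
  by rewrite (Alin x y) -/dy; apply/rowP => j; rewrite !mxE; ring.
have e2 : u + y - (u + x) = dy by rewrite /dy; apply/matrixP => i j; rewrite !mxE; ring.
rewrite e1 in h1; rewrite e2 in g1.
have q1 : dotm y y = dotm x x + 2 * dotm x dy + dotm dy dy.
  by rewrite {1 2}yE dotm_expand.
rewrite q1 c2.
move: h1 g1.
set P1 := h _. set P2 := h _. set P3 := g _. set P4 := g _.
set D1 := 'd h _ _. set D2 := 'd g _ _.
set c := (2 * gamma)^-1.
move=> h1 g1.
lra.
Qed.
End Obj.


Unset Implicit Arguments.
Set Strict Implicit.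

Theorem proposition5 (R : realType) :
  exists C : R, 0 < C /\
  forall (n p d : nat) (h : 'rV[R]_d -> R) (g : 'M[R]_(n.+1, p) -> R)
    (L1h L1g M0 gamma eps : R) (u : 'M[R]_(n.+1, p)) (b : 'rV[R]_d),
    0 <= L1h -> 0 <= L1g -> 0 <= M0 -> 0 < gamma -> 0 < eps < 1 ->
    convex_fun h -> smooth_real L1h h ->
    convex_fun g -> smooth_real L1g g ->
    (exists gt : 'I_n.+1 -> 'rV[R]_p -> R,
        forall w : 'M[R]_(n.+1, p), g w = \sum_(t < n.+1) gt t (row t w)) ->
    exists A : oracle_alg R n.+1 p d,
      (oa_calls A)%:R
        <= C * Num.sqrt (L1h * M0 ^+ 2 * gamma + L1g * gamma + 1)
             * (ln (1 / eps) + 1) /\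
      forall (phi : nat -> 'rV[R]_d -> 'rV[R]_p -> 'rV[R]_d) (x0 : 'rV[R]_d)
        (L0 L1 : R),
        0 <= L0 -> 0 <= L1 ->
        (forall t, (t < n.+1)%N ->
           lipschitz2 L0 (fun w : 'rV[R]_(d + p) => phi t (lsubmx w) (rsubmx w)) /\
           smooth2 L1 (fun w : 'rV[R]_(d + p) => phi t (lsubmx w) (rsubmx w))) ->
        lipschitz2 M0 (@xlast R n p d phi x0) ->
        xlast phi x0 u = b ->
        let vout := run_alg A (gvp (@xtraj R n p d phi x0) u)
                              ('d (@xtraj R n p d phi x0) u) in
        forall vstar : 'M[R]_(n.+1, p),
          (forall w, gn_obj h g gamma phi x0 u vstar <= gn_obj h g gamma phi x0 u w) ->
          gn_obj h g gamma phi x0 u vout - gn_obj h g gamma phi x0 u vstar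
            <= eps * (gn_obj h g gamma phi x0 u 0 - gn_obj h g gamma phi x0 u vstar).

Proof.
exists 8; split; first by [].
move=> n p d h g L1h L1g M0 gamma eps u b hL1h hL1g hM0 hgam heps cvh smh cvg smg _.
case/andP: heps => eps0 eps1.
set kap := L1h * M0 ^+ 2 * gamma + L1g * gamma + 1.
set kap' := 2 * (L1h * M0 ^+ 2 * gamma) + 2 * (L1g * gamma) + 1.
have k0 : 0 <= L1h * M0 ^+ 2 * gamma + L1g * gamma.
  by apply: addr_ge0; apply: mulr_ge0 => //; try apply: mulr_ge0 => //; rewrite ?sqr_ge0 ?ltW.
have kap1 : 1 <= kap by rewrite /kap lerDr.
have kap'1 : 1 <= kap' by rewrite /kap'; lra.
have kap'2 : kap' <= 4 * kap by rewrite /kap /kap'; lra.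
set s := Num.sqrt kap'.
have s1 : 1 <= s.
  by rewrite /s -sqrtr1 ler_sqrt // (le_trans ler01).
have s0 : 0 < s by apply: lt_le_trans s1.
have ss : s ^+ 2 = kap' by rewrite /s sqr_sqrtr // (le_trans ler01).
set mu := gamma^-1. set q := s^-1. set L := mu * s ^+ 2.
set ell := ln (1 / eps) + 1.
have ell1 : 1 <= ell.
  rewrite /ell lerDr ln_ge0 // ler_pdivlMr // mul1r ltW //.
set K := (Num.truncn (s * ell)).+1.
exists (alg h g gamma u b mu L q K); split.
  have X0 : 0 <= s * ell by apply: mulr_ge0; apply: le_trans ler01 _.
  have Kb : (K%:R : R) <= s * ell + 1.
    rewrite /K -addn1 natrD lerD2r.
    by have /andP [] := truncn_itv X0.
  have sk : s <= 2 * Num.sqrt kap.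
    have -> : 2 * Num.sqrt kap = Num.sqrt (4 * kap).
      rewrite sqrtrM ?ler0n // (_ : 4 = 2 ^+ 2) ?sqrtr_sqr ?ger0_norm //.
      by rewrite expr2 -natrM.
    by rewrite /s ler_sqrt // mulr_ge0 // (le_trans ler01).
  have se1 : 1 <= s * ell by rewrite -(mulr1 1) ler_pM // ler01.
  have se2 : s * ell <= 2 * Num.sqrt kap * ell.
    by rewrite ler_wpM2r // (le_trans ler01).
  rewrite /= -mul2n natrM.
  have e : 8 * Num.sqrt kap * ell = 4 * (2 * Num.sqrt kap * ell) by ring.
  rewrite e; lra.
move=> phi x0 L0 L1 hL0 hL1 Hphi lipM0 hb vout vstar Hmin.
have dX : forall v, differentiable (@xtraj R n p d phi x0) v.
  apply: xtraj_diff => t ht w; exact: ((Hphi t ht).2.1 w).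
have [HS0 HC0] := obj_props hL1h hL1g hM0 hgam cvh smh cvg smg (dX u) lipM0 hb.
set F := gn_obj h g gamma phi x0 u in HS0 HC0 Hmin *.
set G := Gtrue h g gamma u b _ _ in HS0 HC0.
have mu0 : 0 < mu by rewrite /mu invr_gt0.
have q0 : 0 < q by rewrite /q invr_gt0.
have q1 : q <= 1 by rewrite /q invf_le1.
have Lq : L * q ^+ 2 = mu.
  by rewrite /L /q -mulrA -exprMn mulfV ?gt_eqF // expr1n mulr1.
have HS : forall x y, F y <= F x + dotm (G x) (y - x) + L / 2 * dotm (y - x) (y - x).
  move=> x y; have -> : L / 2 = L1h * M0 ^+ 2 + L1g + (2 * gamma)^-1.
    rewrite /L ss /kap' /mu; field; by rewrite gt_eqF.
  exact: HS0.
have rate := @fgm_rate R _ _ F G mu L q vstar mu0 q0 q1 Lq HS HC0 Hmin K.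
rewrite /vout run_alg_eq.
apply: (le_trans rate).
have F0 : 0 <= F 0 - F vstar by rewrite subr_ge0.
apply: ler_wpM2r => //.
have q1' : 0 <= 1 - q by rewrite subr_ge0.
have e1 : (1 - q) ^+ K <= expR (- q) ^+ K.
  apply: lerXn2r; rewrite ?nnegrE ?expR_ge0 //.
  by have := expR_ge1Dx (- q).
have e2 : expR (- q) ^+ K = expR (K%:R * - q) by rewrite expRM_natl.
have Kgt : s * ell < K%:R by rewrite /K truncnS_gt.
have e3 : K%:R * - q <= - ell.
  rewrite mulrN lerN2.
  have : s * ell * q <= K%:R * q by rewrite ler_wpM2r // ltW.
  by rewrite mulrAC /q mulfV ?gt_eqF // mul1r.
have e4 : expR (- ell) = eps * (expR 1)^-1.
  rewrite /ell opprD expRD expRN lnK ?posrE ?divr_gt0 //.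
  by rewrite expRN invf_div divr1.
have e5 : 2 <= expR (1 : R) by have := expR_ge1Dx (1 : R).
have e6 : (expR (1 : R))^-1 <= 2^-1.
  by rewrite lef_pV2 ?posrE ?expR_gt0.
have e7 : (1 - q) ^+ K <= eps * 2^-1.
  apply: (le_trans e1); rewrite e2; apply: (le_trans (_ : _ <= expR (- ell))).
    by rewrite ler_expR.
  by rewrite e4 ler_wpM2l // ltW.
have e8 : 2 * (eps * 2^-1) = eps by rewrite mulrCA mulfV ?mulr1.
apply: (le_trans (ler_wpM2l _ e7)) => //.
by rewrite e8.
Qed.
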